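(* Let $H$ be a real Hilbert space, $A:H\to c_0$ bounded linear with adjoint $A^*:\ell^1\to H$ (identifying $c_0^*=\ell^1$), with $A$ and $A^*$ injective. Let $(H_n)_{n\in\mathbb N}$ be subspaces of $H$ with $\dim H_n=n$ whose orthogonal projections $P_n$ satisfy $P_nv\to v$ for all $v\in H$. Let $f\in H$, $u^\dagger\in\ell^1$ with $A^*u^\dagger=f$, and suppose there is $v^\dagger\in H$ with $\|Av^\dagger\|_\infty\le1$, $(Av^\dagger)_i=\operatorname{sign}(u^\dagger_i)$ whenever $u^\dagger_i\ne0$, and $|(Av^\dagger)_i|=1$ if and only if $i\in\operatorname{supp}u^\dagger$. Then there is $n_0\in\mathbb N$ such that for all $n\ge n_0$: (i) $u^\dagger$ is the unique solution of $\min\{\|u\|_1: u\in\ell^1,\ P_nA^*u=P_nf\}$; (ii) there is $v^{\dagger,n}\in H_n$ with $\|Av^{\dagger,n}\|_\infty\le1$, $|(Av^{\dagger,n})_i|=1$ if and only if $i\in\operatorname{supp}u^\dagger$, and $\varepsilon_{v^{\dagger,n}}\ge\frac12\varepsilon_{v^\dagger}$.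
   Context: $A^*$ is defined by $\langle A^*u,z\rangle=\sum_iu_i(Az)_i$. $\operatorname{supp}u=\{i:u_i\ne0\}$. For $v\in H$, $\varepsilon_v=1-\max_{i\notin\operatorname{supp}u^\dagger}|(Av)_i|$. *)

(* Defs.v *)
From HB Require Import structures.
From mathcomp Require Import all_boot all_order all_algebra.
From mathcomp Require Import all_classical all_reals all_analysis.
Set Implicit Arguments. Unset Strict Implicit. Unset Printing Implicit Defensive.
Import Order.TTheory GRing.Theory Num.Theory.
Import numFieldNormedType.Exports.
Local Open Scope classical_set_scope.
Local Open Scope ring_scope.

Section Defs.
Context {R : realType} {V : completeNormedModType R}.

(* ip is an inner product on V inducing the norm of V: together with the
   completeness of V this makes V a real Hilbert space. *)
Definition inner_product (ip : V -> V -> R) : Prop :=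
  [/\ forall x y, ip x y = ip y x,
      forall a x y z, ip (a *: x + y) z = a * ip x z + ip y z &
      forall x, ip x x = `|x| ^+ 2].

Definition bounded_linear_to_c0 (A : V -> nat -> R) : Prop :=
  [/\ forall a x y i, A (a *: x + y) i = a * A x i + A y i,
      (exists C : R, forall x i, `|A x i| <= C * `|x|) &
      forall x, A x @ \oo --> (0 : R)].

Definition l1 (u : nat -> R) : Prop := cvgn (series (fun i => `|u i|)).
Definition l1norm (u : nat -> R) : R := limn (series (fun i => `|u i|)).

Definition is_adjoint (ip : V -> V -> R) (A : V -> nat -> R)
  (Astar : (nat -> R) -> V) : Prop :=
  forall u, l1 u -> forall z, ip (Astar u) z = limn (series (fun i => u i * A z i)).

Definition subspace_dim (S : set V) (n : nat) : Prop :=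
  exists b : 'I_n -> V,
    (forall c : 'I_n -> R, \sum_(i < n) c i *: b i = 0 -> forall i, c i = 0) /\
    S = [set \sum_(i < n) c i *: b i | c in [set: 'I_n -> R]].

Definition orth_proj (ip : V -> V -> R) (S : set V) (p : V -> V) : Prop :=
  forall v, S (p v) /\ forall w, S w -> ip (v - p v) w = 0.

Definition supp (u : nat -> R) : set nat := [set i | u i != 0].

Definition sup_le1 (A : V -> nat -> R) (v : V) : Prop := forall i, `|A v i| <= 1.

(* eps_v = 1 - max_{i notin supp u} |(A v)_i|  (max = sup since A v in c_0) *)
Definition eps (A : V -> nat -> R) (u : nat -> R) (v : V) : R :=
  1 - sup [set `|A v i| | i in ~` supp u].

End Defs.

(* Main.v *)
Require Import Defs.
From HB Require Import structures.
From mathcomp Require Import all_boot all_order all_algebra.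
From mathcomp Require Import all_classical all_reals all_analysis.
From mathcomp Require Import lra.
Import Order.TTheory GRing.Theory Num.Theory.
Import numFieldNormedType.Exports.
Local Open Scope classical_set_scope.
Local Open Scope ring_scope.

Lemma series_finsupp (R : realType) (g : nat -> R) (N : nat) :
  (forall i, (N <= i)%N -> g i = 0) ->
  series g @ \oo --> \sum_(i < N) g i.
Proof.
move=> h; apply: cvg_near_cst; near=> n.
have hn : (N <= n)%N by near: n; exists N.
rewrite /series /= (@big_cat_nat _ _ _ N 0 n _ _ (leq0n N) hn) /= big_mkord.
rewrite [X in _ + X]big1_seq ?addr0 // => i /andP[_].
by rewrite mem_index_iota => /andP[/h].
Unshelve. all: by end_near.
Qed.

Lemma lim_series_finsupp (R : realType) (g : nat -> R) (N : nat) :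
  (forall i, (N <= i)%N -> g i = 0) ->
  cvgn (series g) /\ limn (series g) = \sum_(i < N) g i.
Proof.
move=> h; have hc := @series_finsupp R g N h; split; first by apply/cvg_ex; eexists; exact: hc.
exact: cvg_lim hc.
Qed.

Lemma lim_series_delta (R : realType) (j : nat) (c : R) :
  cvgn (series (fun i => if i == j then c else 0)) /\
  limn (series (fun i => if i == j then c else 0)) = c.
Proof.
have [h1 h2] : cvgn (series (fun i => if i == j then c else 0)) /\
  limn (series (fun i => if i == j then c else 0)) = \sum_(i < j.+1) (if (i : nat) == j then c else 0).
  apply: lim_series_finsupp => i hi; case: eqP => // eij.
  by rewrite eij ltnn in hi.
split => //; rewrite h2 big_ord_recr /= eqxx big1 ?add0r // => i _.
by case: eqP => // eij; have := ltn_ord i; rewrite eij ltnn.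
Qed.

Lemma term_le_lim (R : realType) (g : nat -> R) k :
  (forall i, 0 <= g i) -> cvgn (series g) -> g k <= limn (series g).
Proof.
move=> g0 hc.
have hnd : {homo series g : n m / (n <= m)%N >-> n <= m}.
  move=> n m nm; rewrite /series /= (@big_cat_nat _ _ _ n 0 m _ _ (leq0n n) nm) /= lerDl.
  by apply: sumr_ge0 => i _; apply: g0.
apply: le_trans (nondecreasing_cvgn_le hnd hc k.+1).
rewrite /series /= big_nat_recr //= lerDr.
by apply: sumr_ge0 => i _; apply: g0.
Qed.

Lemma sum_delta (R : realType) (N j : nat) (c : R) : (j < N)%N ->
  \sum_(i < N) (if (i : nat) == j then c else 0) = c.
Proof.
move=> hj; rewrite (bigD1 (Ordinal hj)) //= eqxx big1 ?addr0 // => i hi.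
case: eqP => // eij; move: hi; have -> : i = Ordinal hj by apply: val_inj.
by rewrite eqxx.
Qed.

Lemma fin_bound (R : realType) (a : nat -> R) (p : nat -> bool) N :
  (forall i, p i -> a i < 1) ->
  exists K : R, K < 1 /\ 1/2 <= K /\ forall i, (i < N)%N -> p i -> a i <= K.
Proof.
move=> ha; elim: N => [|N [K [K1 [K2 HK]]]].
  by exists (1/2); split; [lra|split => //; lra].
exists (Num.max K (if p N then a N else 1/2)); split; [|split].
- rewrite gt_max K1 /=; case: ifP => [/ha //|_]; lra.
- by rewrite le_max K2.
- move=> i; rewrite ltnS leq_eqVlt => /orP[/eqP ->|hi] hp.
    by rewrite le_max hp lexx orbT.
  by rewrite le_max HK.
Qed.

Section Work.
Variables (R : realType) (V : completeNormedModType R)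
  (ip : V -> V -> R) (A : V -> nat -> R) (Astar : (nat -> R) -> V)
  (Hn : nat -> set V) (P : nat -> V -> V).
Hypotheses (Hip : inner_product ip) (HA : bounded_linear_to_c0 A)
  (Hadj : is_adjoint ip A Astar)
  (HAsinj : forall u, l1 u -> Astar u = 0 -> u = (fun => 0))
  (Hdim : forall n, subspace_dim (Hn n) n)
  (Hproj : forall n, orth_proj ip (Hn n) (P n))
  (HPcvg : forall v, (fun n => P n v) @ \oo --> v).

Lemma ipDZ a x y z : ip (a *: x + y) z = a * ip x z + ip y z.
Proof. by case: Hip. Qed.
Lemma ipC x y : ip x y = ip y x.
Proof. by case: Hip. Qed.
Lemma ipxx x : ip x x = `|x| ^+ 2.
Proof. by case: Hip. Qed.
Lemma ip0l z : ip 0 z = 0.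
Proof.
have := ipDZ 1 0 0 z; rewrite scale1r addr0 mul1r => h.
by apply: (addrI (ip 0 z)); rewrite addr0 -h.
Qed.
Lemma ipD x y z : ip (x + y) z = ip x z + ip y z.
Proof. by rewrite -[x]scale1r ipDZ mul1r scale1r. Qed.
Lemma ipZ a x z : ip (a *: x) z = a * ip x z.
Proof. by rewrite -[a *: x]addr0 ipDZ ip0l addr0. Qed.
Lemma ipB x y z : ip (x - y) z = ip x z - ip y z.
Proof. by rewrite ipD -scaleN1r ipZ mulN1r. Qed.
Lemma ip_eq0 x : ip x x = 0 -> x = 0.
Proof. by rewrite ipxx => /eqP; rewrite sqrf_eq0 => /eqP/normr0_eq0. Qed.

Lemma ADZ a x y i : A (a *: x + y) i = a * A x i + A y i.
Proof. by case: HA => h _ _; apply: h. Qed.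
Lemma A0 i : A 0 i = 0.
Proof.
have := ADZ 1 0 0 i; rewrite scale1r addr0 mul1r => h.
by apply: (addrI (A 0 i)); rewrite addr0 -h.
Qed.
Lemma AD x y i : A (x + y) i = A x i + A y i.
Proof. by rewrite -[x]scale1r ADZ mul1r scale1r. Qed.
Lemma AZ a x i : A (a *: x) i = a * A x i.
Proof. by rewrite -[a *: x]addr0 ADZ A0 addr0. Qed.
Lemma AB x y i : A (x - y) i = A x i - A y i.
Proof. by rewrite AD -scaleN1r AZ mulN1r. Qed.
Lemma Asum (I : Type) (r : seq I) (F : I -> V) i :
  A (\sum_(j <- r) F j) i = \sum_(j <- r) A (F j) i.
Proof.
elim: r => [|j r IH]; first by rewrite !big_nil A0.
by rewrite !big_cons AD IH.
Qed.

Lemma Abound : exists C : R, 0 < C /\ forall x i, `|A x i| <= C * `|x|.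
Proof.
case: HA => _ [C HC] _; exists (`|C| + 1); split; first by rewrite ltr_pwDr.
move=> x i; apply: (le_trans (HC x i)); apply: ler_wpM2r => //.
by apply: le_trans (ler_norm C) _; rewrite lerDl.
Qed.

Lemma Acvg (x : nat -> V) (y : V) i : x @ \oo --> y ->
  (fun n => A (x n) i) @ \oo --> A y i.
Proof.
move=> hx; have [C [C0 HC]] := Abound.
apply/cvgrPdist_lt => e e0.
move/cvgrPdist_lt : hx => /(_ (e / C)); rewrite divr_gt0 // => /(_ isT).
apply: filterS => n hn.
rewrite -AB; apply: (le_lt_trans (HC _ _)).
by rewrite -ltr_pdivlMl // mulrC.
Qed.

Lemma Hn0 n : Hn n 0.
Proof.
case: (Hdim n) => b [_ ->]; exists (fun => 0) => //.
by rewrite big1 // => i _; rewrite scale0r.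
Qed.
Lemma HnDZ n a x y : Hn n x -> Hn n y -> Hn n (a *: x + y).
Proof.
case: (Hdim n) => b [_ ->] [c _ <-] [d _ <-].
exists (fun i => a * c i + d i) => //.
rewrite scaler_sumr -big_split /=; apply: eq_bigr => i _.
by rewrite scalerDl scalerA.
Qed.
Lemma HnD n x y : Hn n x -> Hn n y -> Hn n (x + y).
Proof. by move=> hx hy; rewrite -[x]scale1r; apply: HnDZ. Qed.
Lemma HnZ n a x : Hn n x -> Hn n (a *: x).
Proof. by move=> hx; rewrite -[a *: x]addr0; apply: HnDZ => //; apply: Hn0. Qed.
Lemma HnB n x y : Hn n x -> Hn n y -> Hn n (x - y).
Proof. by move=> hx hy; rewrite -scaleN1r addrC; apply: HnDZ. Qed.
Lemma Hnsum n (I : eqType) (r : seq I) (F : I -> V) :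
  (forall j, j \in r -> Hn n (F j)) -> Hn n (\sum_(j <- r) F j).
Proof.
elim: r => [|j r IH] h; first by rewrite big_nil; apply: Hn0.
rewrite big_cons; apply: HnD; first by apply: h; rewrite inE eqxx.
by apply: IH => k hk; apply: h; rewrite inE hk orbT.
Qed.


Lemma Aindep (m : nat) (L : seq nat) (beta : nat -> R) : m \notin L ->
  ~ (forall z, A z m = \sum_(j <- L) beta j * A z j).
Proof.
move=> mL hz.
pose u i := (if i == m then 1 else 0) - \sum_(j <- L) (if i == j then beta j else 0).
pose N := (\max_(j <- m :: L) j).+1.
have uN i : (N <= i)%N -> u i = 0.
  move=> hi; rewrite /u big1_seq.
    case: eqP => [eim|]; last by rewrite subr0.
    by move: hi; rewrite /N eim ltnNge leq_bigmax_seq // inE eqxx.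
  move=> j /andP[_ hj]; case: eqP => // eij; move: hi.
  by rewrite /N eij ltnNge leq_bigmax_seq // inE hj orbT.
have mN : (m < N)%N by rewrite /N ltnS leq_bigmax_seq // inE eqxx.
have jN j : j \in L -> (j < N)%N.
  by move=> hj; rewrite /N ltnS leq_bigmax_seq // inE hj orbT.
have l1u : l1 u.
  by case: (@lim_series_finsupp R (fun i => `|u i|) N) => // i /uN ->; rewrite normr0.
have hip z : ip (Astar u) z = 0.
  rewrite (Hadj _ l1u).
  case: (@lim_series_finsupp R (fun i => u i * A z i) N) => [i /uN ->|_ ->].
    by rewrite mul0r.
  under eq_bigr => i _ do rewrite /u mulrBl mulr_suml.
  rewrite sumrB.
  have -> : \sum_(i < N) (if (i : nat) == m then 1 else 0) * A z i = A z m.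
    rewrite -(@sum_delta R N m (A z m) mN); apply: eq_bigr => i _.
    by case: eqP => [->|_]; rewrite ?mul1r ?mul0r.
  rewrite exchange_big /=.
  have -> : \sum_(j <- L) \sum_(i < N) (if (i : nat) == j then beta j else 0) * A z i
      = \sum_(j <- L) beta j * A z j.
    rewrite big_seq [RHS]big_seq; apply: eq_bigr => j hj.
    rewrite -(@sum_delta R N j (beta j * A z j) (jN j hj)); apply: eq_bigr => i _.
    by case: eqP => [->|_]; rewrite ?mul0r.
  by rewrite -hz subrr.
have Au0 : Astar u = 0 by apply: ip_eq0; apply: hip.
have := HAsinj _ l1u Au0 => /(congr1 (fun g => g m)).
rewrite /u eqxx big1_seq ?subr0; first by move/eqP; rewrite oner_eq0.
by move=> j /andP[_ hj]; case: eqP => // emj; rewrite emj hj in mL.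
Qed.

Lemma sum_seq_delta (L : seq nat) (c : nat -> R) i : uniq L -> i \in L ->
  \sum_(j <- L) (if i == j then c j else 0) = c i.
Proof.
elim: L => [//|k L IH] /= /andP[kL uL]; rewrite inE big_cons => /orP[/eqP ->|hi].
  rewrite eqxx big1_seq ?addr0 // => j /andP[_ hj].
  by case: eqP => // ekj; rewrite ekj hj in kL.
rewrite IH //; case: eqP => [eik|]; last by rewrite add0r.
by rewrite -eik hi in kL.
Qed.

Definition biorth (L : seq nat) (ww : nat -> V) :=
  forall i j, i \in L -> j \in L -> A (ww j) i = (i == j)%:R.

Lemma step_alg (L : seq nat) (ww : nat -> V) (x : V) : uniq L -> biorth L ww ->
  forall i, i \in L -> A (x - \sum_(j <- L) A x j *: ww j) i = 0.
Proof.
move=> uL hb i hi; rewrite AB Asum.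
rewrite big_seq (eq_bigr (fun j => if i == j then A x j else 0)) -?big_seq.
  by rewrite sum_seq_delta // subrr.
by move=> j hj; rewrite AZ hb //; case: eqP; rewrite ?mulr1 ?mulr0.
Qed.

Definition ext (m : nat) (ww : nat -> V) (z : V) (k : nat) : V :=
  if k == m then (A z m)^-1 *: z else ww k - A (ww k) m *: ((A z m)^-1 *: z).

Lemma ext_biorth (m : nat) (L : seq nat) (ww : nat -> V) (z : V) :
  m \notin L -> biorth L ww -> (forall i, i \in L -> A z i = 0) -> A z m != 0 ->
  biorth (m :: L) (ext m ww z).
Proof.
move=> mL hb hz hm i j; rewrite !inE /ext.
have Awm k : A ((A z m)^-1 *: z) k = (A z m)^-1 * A z k by rewrite AZ.
move=> /orP[/eqP ->|hi] /orP[/eqP ->|hj].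
- by rewrite eqxx Awm mulVf.
- have -> : (j == m) = false by apply/negP => /eqP ejm; rewrite -ejm hj in mL.
  rewrite AB AZ Awm mulVf // mulr1 subrr.
  by case: eqP => // emj; rewrite emj hj in mL.
- rewrite eqxx Awm (hz i hi) mulr0; case: eqP => // eim; by rewrite -eim hi in mL.
- have -> : (j == m) = false by apply/negP => /eqP ejm; rewrite -ejm hj in mL.
  by rewrite AB AZ Awm (hz i hi) mulr0 mulr0 subr0 hb.
Qed.

Lemma biortho (L : seq nat) : uniq L ->
  exists w : nat -> nat -> V, exists b : nat -> V,
   (\forall n \near \oo, (forall j, j \in L -> Hn n (w n j)) /\ biorth L (w n))
   /\ (forall j, j \in L -> (fun n => w n j) @ \oo --> b j)
   /\ biorth L b.
Proof.
elim: L => [_|m L IH /= /andP[mL uL]].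
  exists (fun _ _ => 0), (fun _ => 0); split; last by split.
  by apply: nearW => n; split.
have [w [b [hw [hcv hb]]]] := IH uL.
pose y' y := y - \sum_(j <- L) A y j *: b j.
have [y hy] : exists y, A (y' y) m != 0.
  apply: contrapT => hne; apply: (@Aindep m L (fun j => A (b j) m) mL) => z.
  have h0 : A (y' z) m = 0 by apply: contrapT => h; apply: hne; exists z; apply/eqP.
  move: h0; rewrite /y' AB Asum => /eqP; rewrite subr_eq0 => /eqP ->.
  by apply: eq_bigr => j _; rewrite AZ mulrC.
pose zf n := P n y - \sum_(j <- L) A (P n y) j *: w n j.
exists (fun n => ext m (w n) (zf n)), (ext m b (y' y)).
have hzf : zf @ \oo --> y' y.
  apply: cvgB; first exact: HPcvg.
  rewrite big_seq.
  have -> : (fun n => \sum_(j <- L) A (P n y) j *: w n j) =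
            (fun n => \sum_(j <- L | j \in L) A (P n y) j *: w n j).
    by apply: funext => n; rewrite big_seq.
  apply: (@cvg_big _ _ _ _ _ add_continuous _ _ _ (fun j n => A (P n y) j *: w n j)) => j hj.
  by apply: cvgZ; [apply: Acvg; exact: HPcvg| exact: hcv].
have hAm : (fun n => A (zf n) m) @ \oo --> A (y' y) m := @Acvg zf (y' y) m hzf.
have hwm : (fun n => (A (zf n) m)^-1 *: zf n) @ \oo --> (A (y' y) m)^-1 *: y' y.
  by apply: cvgZ => //; apply: cvgV.
split; [|split].
- have hnz : \forall n \near \oo, A (zf n) m != 0 by apply: cvgr_neq0 hAm hy.
  near=> n.
  have [hH hB] : (forall j, j \in L -> Hn n (w n j)) /\ biorth L (w n) by near: n.
  have hzH : Hn n (zf n).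
    apply: HnB; first by case: (Hproj n y).
    by apply: Hnsum => j hj; apply: HnZ; apply: hH.
  split.
    move=> j; rewrite inE /ext; case: eqP => [_ _|_ /= hj]; first by apply: HnZ.
    by apply: HnB; [apply: hH | apply: HnZ; apply: HnZ].
  apply: ext_biorth => //; first by apply: step_alg.
  by near: n.
- move=> j; rewrite inE /ext; case: eqP => [_ _|_ /= hj]; first exact: hwm.
  by apply: cvgB; [apply: hcv|apply: cvgZ => //; apply: Acvg; apply: hcv].
- by apply: ext_biorth => //; apply: step_alg.
Unshelve. all: by end_near.
Qed.

Lemma main (f : V) (udag : nat -> R) (vdag : V) :
  l1 udag -> Astar udag = f ->
  sup_le1 A vdag ->
  (forall i, udag i != 0 -> A vdag i = Num.sg (udag i)) ->
  (forall i, `|A vdag i| = 1 <-> udag i != 0) ->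
  exists n0 : nat, forall n, (n0 <= n)%N ->
    (forall u, l1 u -> P n (Astar u) = P n f ->
       l1norm udag <= l1norm u /\ (l1norm u <= l1norm udag -> u = udag)) /\
    (exists vn : V, Hn n vn /\ sup_le1 A vn /\
       (forall i, `|A vn i| = 1 <-> udag i != 0) /\
       eps A udag vn >= eps A udag vdag / 2).
Proof.
move=> l1ud hf hsup hsg hiff.
have Ac0 : A vdag @ \oo --> 0 by case: HA => _ _ h; exact: h vdag.
have [N hN] : exists N, forall i, (N <= i)%N -> `|A vdag i| < 1/2.
  move/cvgrPdist_lt: Ac0 => /(_ (1/2)) h.
  have : (0:R) < 1/2 by lra.
  move/h => [N _ hN]; exists N => i hi; have := hN i hi.
  by rewrite sub0r normrN.
have supN i : udag i != 0 -> (i < N)%N.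
  move=> hi; rewrite ltnNge; apply/negP => hNi; have := hN i hNi.
  rewrite (proj2 (hiff i) hi); lra.
have nsupp i : (~` supp udag) i <-> udag i = 0.
  rewrite /supp /=; split => [h|h]; first by move/negP: h; rewrite negbK => /eqP.
  by rewrite h eqxx.
pose L := [seq i <- iota 0 N | udag i != 0].
have uL : uniq L by rewrite filter_uniq // iota_uniq.
have memL i : (i \in L) = (udag i != 0).
  apply/idP/idP => [|h]; first by rewrite mem_filter => /andP[].
  by rewrite mem_filter h mem_iota add0n supN.
have offlt i : udag i = 0 -> `|A vdag i| < 1.
  move=> h; rewrite lt_neqAle hsup andbT; apply/eqP => /hiff; rewrite h eqxx //.
have [K [K1 [K2 HK]]] := @fin_bound R (fun i => `|A vdag i|) (fun i => udag i == 0) N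
    (fun i h => offlt i (eqP h)).
pose E := [set `|A vdag i| | i in ~` supp udag].
have E0 : E !=set0.
  exists `|A vdag N|; exists N => //; apply/nsupp.
  by case: (eqVneq (udag N) 0) => // /supN; rewrite ltnn.
have EK : ubound E K.
  move=> x [i /nsupp hi <-]; case: (leqP N i) => h.
    by apply: ltW; apply: lt_le_trans (hN i h) K2.
  by apply: HK => //; rewrite hi.
have EM1 : ubound E 1 by move=> x [i _ <-]; apply: hsup.
have ubE i : udag i = 0 -> `|A vdag i| <= sup E.
  move=> hi; apply: sup_upper_bound; first by split => //; exists 1.
  by exists i => //; apply/nsupp.
have supK : sup E <= K by apply: ge_sup.
pose ep := 1 - sup E.
have ep0 : 0 < ep by rewrite /ep; lra.
have [w [b [hw [hcv hb]]]] := biortho L uL.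
pose vn n := P n vdag + \sum_(j <- L) (A vdag j - A (P n vdag) j) *: w n j.
have hsum : (fun n => \sum_(j <- L) (A vdag j - A (P n vdag) j) *: w n j) @ \oo --> 0.
  have e : \sum_(j <- L | j \in L) (A vdag j - A vdag j) *: b j = 0.
    by rewrite big1 // => j _; rewrite subrr scale0r.
  have h := (@cvg_big _ _ +%R (0:V) (fun j => j \in L) add_continuous _ _ L
     (fun j n => (A vdag j - A (P n vdag) j) *: w n j) (fun j => (A vdag j - A vdag j) *: b j) _).
  rewrite e in h.
  rewrite (eq_cvg _ (g := fun n => \sum_(j <- L | j \in L) (A vdag j - A (P n vdag) j) *: w n j)).
    apply: h => j hj; apply: cvgZ; last exact: hcv.
    by apply: cvgB; [exact: cvg_cst| apply: Acvg; exact: HPcvg].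
  by move=> n; rewrite [LHS]big_seq.
have hvn : vn @ \oo --> vdag.
  have h := cvgD (HPcvg vdag) hsum; rewrite addr0 in h; exact: h.
have [C [C0 HC]] := Abound.
have hnear : \forall n \near \oo, C * `|vdag - vn n| < ep / 2.
  move/cvgrPdist_lt: hvn => /(_ (ep / 2 / C)) h.
  have : 0 < ep / 2 / C by rewrite divr_gt0 // divr_gt0.
  move/h; apply: filterS => n hn.
  by rewrite -ltr_pdivlMl // mulrC.
have [n0 _ hn0] := filterI hw hnear.
exists n0 => n hn; have [[hwH hwb] hd] := hn0 n hn.
have PH z : Hn n (P n z) by case: (Hproj n z).
have vnH : Hn n (vn n).
  apply: HnD => //; apply: Hnsum => j hj; apply: HnZ; exact: hwH.
have AvnL i : i \in L -> A (vn n) i = A vdag i.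
  move=> hi; rewrite /vn AD Asum.
  rewrite big_seq (eq_bigr (fun j => if i == j then A vdag j - A (P n vdag) j else 0)).
    by rewrite -big_seq sum_seq_delta // addrC subrK.
  by move=> j hj; rewrite AZ hwb //; case: eqP; rewrite ?mulr1 ?mulr0.
have Adiff i : `|A (vn n) i - A vdag i| < ep / 2.
  rewrite -AB; apply: le_lt_trans (HC _ _) _; by rewrite distrC.
have Aoff i : udag i = 0 -> `|A (vn n) i| <= 1 - ep / 2.
  move=> hi; have h1 := ubE i hi; have h2 := Adiff i.
  have h3 : `|A (vn n) i| <= `|A vdag i| + `|A (vn n) i - A vdag i|.
    by rewrite -[X in `|X| <= _](subrK (A vdag i)) addrC ler_normD.
  rewrite /ep in h2 *; lra.
have Aon i : udag i != 0 -> `|A (vn n) i| = 1.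
  by move=> hi; rewrite AvnL ?memL //; apply/hiff.
have s1 i : `|A (vn n) i| <= 1.
  case: (eqVneq (udag i) 0) => [h|h]; last by rewrite Aon.
  have := Aoff i h; lra.
split.
  move=> u l1u hPu.
  pose s i := A (vn n) i.
  have hproj z : Hn n z -> ip (Astar u) z = ip f z.
    move=> hz; have [_ h1] := Hproj n (Astar u); have [_ h2] := Hproj n f.
    have := h1 z hz; have := h2 z hz; rewrite !ipB hPu; lra.
  have us i : u i * s i <= `|u i|.
    have := ler_norm (u i * s i); rewrite normrM => h; apply: le_trans h _.
    by apply: ler_piMr => //; apply: s1.
  have cvus : cvgn (series (fun i => u i * s i)).
    apply: normed_cvg; apply: (@series_le_cvg _ _ (fun i => `|u i|)) => // i.
    - by rewrite /=. - by rewrite /= normrM; apply: ler_piMr => //; apply: s1.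
  have Lud : limn (series (fun i => u i * s i)) = l1norm udag.
    rewrite -(Hadj _ l1u) hproj // -hf (Hadj _ l1ud) /l1norm.
    congr (limn (series _)); apply: funext => i.
    case: (eqVneq (udag i) 0) => [->|h]; first by rewrite mul0r normr0.
    by rewrite /s AvnL ?memL // hsg // normrEsg mulrC.
  have l1le : limn (series (fun i => u i * s i)) <= l1norm u.
    by apply: lim_series_le.
  split; first by rewrite -Lud.
  move=> hle.
  pose g i := `|u i| - u i * s i.
  have g0 i : 0 <= g i by rewrite /g subr_ge0.
  have cvg_g : cvgn (series g) by exact: (is_cvg_seriesB l1u cvus).
  have limg : limn (series g) <= 0.
    have := lim_seriesB l1u cvus; rewrite -/(l1norm u) => e.
    rewrite /g; rewrite [X in limn (series X)](_ : _ = (fun i => `|u i|) - (fun i => u i * s i)) //.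
    rewrite e Lud; lra.
  have gk k : g k = 0.
    by apply/eqP; rewrite eq_le g0 andbT; apply: le_trans (@term_le_lim R g k g0 cvg_g) limg.
  have uoff k : udag k = 0 -> u k = 0.
    move=> hk; apply/normr0_eq0.
    have h1 := gk k; have h2 := Aoff k hk; rewrite /g in h1.
    have h3 : u k * s k <= `|u k| * `|s k| by rewrite -normrM ler_norm.
    have h4 : 0 <= `|u k| by [].
    rewrite /s in h3 h1; nra.
  apply: funext => k; case: (eqVneq (udag k) 0) => [h|h]; first by rewrite h uoff.
  have kL : k \in L by rewrite memL.
  have coord x : l1 x -> (forall i, x i != 0 -> i \in L) -> ip (Astar x) (w n k) = x k.
    move=> l1x hx; rewrite (Hadj _ l1x); have [_ <-] := @lim_series_delta R k (x k).
    congr (limn (series _)); apply: funext => i.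
    case: (boolP (i \in L)) => hi.
      by rewrite hwb //; case: eqP => [->|_]; rewrite ?mulr1 ?mulr0.
    have /negPn/eqP xi0 := contra (hx i) hi.
    rewrite xi0 mul0r; case: eqP => // eik; by move: hi; rewrite eik kL.
  rewrite -(coord u l1u) -?(coord udag l1ud) ?hf.
  - by apply: hproj; apply: hwH.
  - by move=> i; rewrite memL.
  - by move=> i hu; rewrite memL; apply/eqP => h0; move/eqP: hu; apply; exact: uoff.
exists (vn n); split => //; split => //; split.
  move=> i; split => [h1|]; last exact: Aon.
  apply/eqP => h0; have := Aoff i h0; rewrite h1; lra.
have hs : sup [set `|A (vn n) i| | i in ~` supp udag] <= 1 - ep / 2.
  apply: ge_sup.
    case: E0 => x [i hi _]; exists `|A (vn n) i|; by exists i.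
  by move=> x [i /nsupp hi <-]; apply: Aoff.
rewrite /eps -/E -/ep; lra.
Unshelve. all: by end_near.
Qed.

End Work.

Theorem lemma3 (R : realType) (V : completeNormedModType R)
  (ip : V -> V -> R) (A : V -> nat -> R) (Astar : (nat -> R) -> V)
  (Hn : nat -> set V) (P : nat -> V -> V)
  (f : V) (udag : nat -> R) (vdag : V) :
  inner_product ip ->
  bounded_linear_to_c0 A ->
  is_adjoint ip A Astar ->
  (forall v, (forall i, A v i = 0) -> v = 0) ->
  (forall u, l1 u -> Astar u = 0 -> u = (fun => 0)) ->
  (forall n, subspace_dim (Hn n) n) ->
  (forall n, orth_proj ip (Hn n) (P n)) ->
  (forall v, (fun n => P n v) @ \oo --> v) ->
  l1 udag -> Astar udag = f ->
  sup_le1 A vdag ->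
  (forall i, udag i != 0 -> A vdag i = Num.sg (udag i)) ->
  (forall i, `|A vdag i| = 1 <-> udag i != 0) ->
  exists n0 : nat, forall n, (n0 <= n)%N ->
    (forall u, l1 u -> P n (Astar u) = P n f ->
       l1norm udag <= l1norm u /\ (l1norm u <= l1norm udag -> u = udag)) /\
    (exists vn : V, Hn n vn /\ sup_le1 A vn /\
       (forall i, `|A vn i| = 1 <-> udag i != 0) /\
       eps A udag vn >= eps A udag vdag / 2).
Proof.
move=> Hip HA Hadj _ HAsinj Hdim Hproj HPcvg.
exact: (@main R V ip A Astar Hn P Hip HA Hadj HAsinj Hdim Hproj HPcvg f udag vdag).
Qed.
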